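(* In the single-node deterministic selection process described in the context, for every $\tau\ge1$, $$\big|V^*(i)-\mathbb{E}[V_\tau(i)]\big|\le\frac{c_4}{\tau^{c_5}},\qquad c_4=(b-1)\Big(\Big(\frac{c_1}{\Delta_{\min}(i)}\Big)^{1/c_2}+1\Big),\quad c_5=1-\frac{c_3}{c_2}.$$
   Context: Fix constants $c_1>0$ and $0<c_3<c_2$. A node $i$ has a finite set $C(i)$ of $b\ge2$ children; each child $j$ has a deterministic value $Q^*(j)\in[0,1]$, and there is a unique maximizer $j^*=\arg\max_{j\in C(i)}Q^*(j)$. Set $V^*(i)=Q^*(j^* )$, $\Delta(j)=Q^*(j^* )-Q^*(j)$ and $\Delta_{\min}(i)=\min_{j\neq j^*}\Delta(j)>0$. The node is visited at times $s=1,2,\dots$; at visit $s$ one child $\mu(s)$ is selected and yields value $Q^*(\mu(s))$. Let $T(i,s)=s-1$ be the number of previous visits to $i$ and $T(j,s)$ the number of previous selections of $j$ (before visit $s$). Selection rule: if some child has $T(j,s)=0$, select one such child (chosen at random); otherwise select a maximizer of $Q^*(j)+c_1\,T(i,s)^{c_3}/T(j,s)^{c_2}$, ties broken at random. After $\tau$ visits, $T_\tau(j)$ denotes the number of selections of $j$ among visits $1,\dots,\tau$, and $V_\tau(i)=\frac1\tau\sum_{s=1}^{\tau}Q^*(\mu(s))$ is the average value of node $i$. *)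

(* Defs.v *)
From HB Require Import structures.
From mathcomp Require Import all_boot all_order all_algebra.
From mathcomp Require Import all_classical all_reals all_analysis.
Set Implicit Arguments. Unset Strict Implicit. Unset Printing Implicit Defensive.
Import Order.TTheory GRing.Theory Num.Theory.
Local Open Scope ring_scope.

Section Selection.
Variables (R : realType) (C : finType) (Q : C -> R) (c1 c2 c3 : R).

(* A history h : seq C lists the children selected at previous visits
   (in order); at visit s, size h = s - 1 = T(i,s). *)

Definition Tcount (h : seq C) (j : C) : nat := count (pred1 j) h.

Definition score (h : seq C) (j : C) : R :=
  Q j + c1 * (powR (size h)%:R c3) / powR (Tcount h j)%:R c2.

Definition candidates (h : seq C) : seq C :=
  let unvisited := [seq j <- enum C | Tcount h j == 0%N] in
  if unvisited != [::] then unvisited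
  else [seq j <- enum C | all (fun k => score h k <= score h j) (enum C)].

(* Expectation of f over the random continuation of history h for n more
   visits, each choice uniform among the candidates. *)
Fixpoint exp_run (n : nat) (h : seq C) (f : seq C -> R) : R :=
  match n with
  | 0%N => f h
  | n'.+1 => (\sum_(c <- candidates h) exp_run n' (rcons h c) f)
               / (size (candidates h))%:R
  end.

Definition avg_value (tau : nat) (h : seq C) : R :=
  (\sum_(j <- h) Q j) / tau%:R.

Definition expected_value (tau : nat) : R :=
  exp_run tau [::] (avg_value tau).

End Selection.

(* Main.v *)
Require Import Defs.
From HB Require Import structures.
From mathcomp Require Import all_boot all_order all_algebra.
From mathcomp Require Import all_classical all_reals all_analysis.
From mathcomp Require Import lra.
Import Order.TTheory GRing.Theory Num.Theory.
Local Open Scope ring_scope.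

Section S.
Variables (R : realType) (C : finType) (Q : C -> R) (c1 c2 c3 : R).

Lemma cand_nonempty (h : seq C) (j0 : C) : candidates Q c1 c2 c3 h != [::].
Proof.
rewrite /candidates /=. case: ifP => // _.
set F := score Q c1 c2 c3 h.
have [i _ Hi] := @arg_maxP _ _ C j0 xpredT F isT.
have : i \in [seq j <- enum C | all (fun k => F k <= F j) (enum C)].
  by rewrite mem_filter mem_enum andbT; apply/allP => k _; exact: Hi.
by move=> Hm; apply/negP => /eqP E; rewrite E in Hm.
Qed.

Lemma sum_seq_bounds (s : seq C) (F : C -> R) lo hi :
  (forall c, c \in s -> lo <= F c <= hi) ->
  lo * (size s)%:R <= \sum_(c <- s) F c <= hi * (size s)%:R.
Proof.
elim: s => [|a s IH] H; first by rewrite big_nil !mulr0 lexx.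
rewrite big_cons /= -addn1 natrD !mulrDr !mulr1.
have /andP[H1 H2] := H a (mem_head _ _).
have /andP[H3 H4] : lo * (size s)%:R <= \sum_(c <- s) F c <= hi * (size s)%:R.
  by apply: IH => c cs; apply: H; rewrite in_cons cs orbT.
by apply/andP; split; rewrite addrC lerD.
Qed.

Lemma exp_run_inv (P : seq C -> Prop) (f : seq C -> R) lo hi (j0 : C) n h :
  P h -> (forall h c, P h -> c \in candidates Q c1 c2 c3 h -> P (rcons h c)) ->
  (forall h', P h' -> size h' = (size h + n)%N -> lo <= f h' <= hi) ->
  lo <= exp_run Q c1 c2 c3 n h f <= hi.
Proof.
move=> Ph Hstep; elim: n h Ph => [|n IH] h Ph Hf /=.
  by apply: Hf; rewrite ?addn0.
set s := candidates Q c1 c2 c3 h.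
have sz : (0 < size s)%N by rewrite lt0n size_eq0 cand_nonempty.
have szR : 0 < (size s)%:R :> R by rewrite ltr0n.
have Hc : forall c, c \in s -> lo <= exp_run Q c1 c2 c3 n (rcons h c) f <= hi.
  move=> c cs; apply: IH; first exact: Hstep.
  by move=> h' Ph' E; apply: Hf => //; rewrite E size_rcons addSnnS.
have /andP[H1 H2] := @sum_seq_bounds s _ lo hi Hc.
by rewrite ler_pdivlMr // ler_pdivrMr // H1 H2.
Qed.

Definition Inv (jstar : C) (Dmin : R) (h : seq C) := forall j, j != jstar ->
  (Tcount h j <= 1)%N \/ Dmin * powR ((Tcount h j).-1)%:R c2 <= c1 * powR (size h)%:R c3.

Lemma Tcount_rcons (h : seq C) (c j : C) : Tcount (rcons h c) j = (Tcount h j + (c == j))%N.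
Proof. by rewrite /Tcount -cats1 count_cat /= addn0. Qed.

Lemma powR_mono_nat (m n : nat) : 0 <= c3 -> (m <= n)%N -> powR (m%:R : R) c3 <= powR (n%:R : R) c3.
Proof.
move=> c30 mn; apply: ge0_ler_powR => //; rewrite ?nnegrE ?ler0n ?ler_nat //.
Qed.

Lemma inv_step (jstar : C) (Dmin : R) (h : seq C) (c : C) : 0 < c1 -> 0 < c3 ->
  (forall j, j != jstar -> Dmin <= Q jstar - Q j) ->
  Inv jstar Dmin h -> c \in candidates Q c1 c2 c3 h -> Inv jstar Dmin (rcons h c).
Proof.
move=> c1p c3p HD Ih cin j jn.
rewrite Tcount_rcons size_rcons.
have mono := powR_mono_nat (size h) (size h).+1 (ltW c3p) (leqnSn (size h)).
have mono' : c1 * powR (size h)%:R c3 <= c1 * powR (size h).+1%:R c3.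
  by rewrite ler_pM2l.
case: (eqVneq c j) => [ecj|ncj]; last first.
  rewrite addn0; case: (Ih j jn) => [->|H]; [by left | right; exact: le_trans H mono'].
subst c; case Ht: (Tcount h j) => [|t]; first by left.
right; rewrite addn1 /=.
move: cin; rewrite /candidates /=; case: ifP => [_|/negbFE/eqP Hu].
  by rewrite mem_filter Ht.
rewrite mem_filter => /andP[/allP Hall _].
have Hs := Hall jstar (mem_enum _ jstar).
rewrite /score Ht in Hs.
apply: le_trans mono'.
have pt : 0 < powR t.+1%:R c2 by rewrite powR_gt0 // ltr0n.
have A0 : 0 <= c1 * powR (size h)%:R c3 / powR (Tcount h jstar)%:R c2.
  by rewrite divr_ge0 // ?mulr_ge0 ?powR_ge0 // ltW.
rewrite -ler_pdivlMr //.
apply: le_trans (HD j jn) _.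
by rewrite lerBlDl; apply: le_trans Hs; rewrite lerDl.
Qed.

Lemma sum_count (h : seq C) (F : C -> R) :
  \sum_(x <- h) F x = \sum_j (Tcount h j)%:R * F j.
Proof.
elim: h => [|a h IH]; first by rewrite big_nil big1 // => j _; rewrite mul0r.
rewrite big_cons IH.
have -> : \sum_j (Tcount (a :: h) j)%:R * F j
   = \sum_j ((a == j)%:R * F j + (Tcount h j)%:R * F j).
  by apply: eq_bigr => j _; rewrite /Tcount /= natrD mulrDl eq_sym.
rewrite big_split /=; congr (_ + _).
rewrite (bigD1 a) //= eqxx mul1r big1 ?addr0 // => k; rewrite eq_sym => /negbTE ->; by rewrite mul0r.
Qed.

Lemma sum_sub (h : seq C) (F : C -> R) a :
  \sum_(x <- h) (a - F x) = a * (size h)%:R - \sum_(x <- h) F x.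
Proof.
elim: h => [|b h IH]; first by rewrite !big_nil mulr0 subr0.
rewrite !big_cons IH /= -addn1 natrD mulrDr mulr1; lra.
Qed.

Lemma count_bound (jstar : C) (Dmin : R) (h : seq C) (j : C) :
  0 < c1 -> 0 < c2 -> 0 < Dmin -> Inv jstar Dmin h -> j != jstar ->
  (Tcount h j)%:R <= powR (c1 / Dmin) (c2^-1) * powR (size h)%:R (c3 / c2) + 1.
Proof.
move=> c1p c2p Dp Ih jn.
have K0 : 0 <= powR (c1 / Dmin) (c2^-1) * powR (size h)%:R (c3 / c2).
  by rewrite mulr_ge0 ?powR_ge0.
case: (leqP (Tcount h j) 1) => [H|Hgt].
  apply: le_trans (_ : 1 <= _); last by rewrite lerDr.
  by rewrite -[1]/(1%:R) ler_nat.
case: (Ih j jn) => [H|H]; first by rewrite ltnNge H in Hgt.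
set t := Tcount h j in H Hgt *.
have H' : powR (t.-1)%:R c2 <= c1 / Dmin * powR (size h)%:R c3.
  by rewrite mulrAC ler_pdivlMr // mulrC.
have c2i : 0 <= c2^-1 by rewrite invr_ge0 ltW.
have Hk := @ge0_ler_powR R (c2^-1) c2i _ _ (powR_ge0 _ _) (mulr_ge0 (divr_ge0 (ltW c1p) (ltW Dp)) (powR_ge0 _ _)) H'.
move: Hk; rewrite -powRrM mulfV ?gt_eqF // powRr1 ?ler0n //.
rewrite (@powRM _ (c1 / Dmin)); last 2 first.
- by rewrite divr_ge0 // ltW.
- exact: powR_ge0.
rewrite -powRrM => Hk.
have -> : t%:R = (t.-1)%:R + 1 :> R.
  by rewrite natr1 prednK // ltnW.
by rewrite lerD2r.
Qed.
End S.

Theorem lemma7 (R : realType) (C : finType) (Q : C -> R) (c1 c2 c3 : R)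
  (jstar : C) (Dmin : R) (tau : nat) :
  0 < c1 -> 0 < c3 -> c3 < c2 ->
  (2 <= #|C|)%N ->
  (forall j, 0 <= Q j <= 1) ->
  (forall j, j != jstar -> Q j < Q jstar) ->
  (* Dmin = Delta_min(i) = min over j <> jstar of (Q jstar - Q j) *)
  (exists2 j : C, j != jstar & Dmin = Q jstar - Q j) ->
  (forall j, j != jstar -> Dmin <= Q jstar - Q j) ->
  (1 <= tau)%N ->
  `| Q jstar - expected_value Q c1 c2 c3 tau |
    <= ((#|C|)%:R - 1) * (powR (c1 / Dmin) (c2^-1) + 1)
       / powR tau%:R (1 - c3 / c2).
Proof.
move=> c1p c3p c32 C2 Q01 Qlt [j1 j1n Dmin_eq] HD tau1.
idtac.
have Dp : 0 < Dmin by rewrite Dmin_eq subr_gt0 Qlt.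
have c2p : 0 < c2 by apply: lt_trans c32.
set K := powR (c1 / Dmin) (c2^-1).
set a := c3 / c2.
set B := ((#|C|)%:R - 1) * (K + 1) / powR tau%:R (1 - a).
have K0 : 0 <= K by exact: powR_ge0.
have tauR : 0 < tau%:R :> R by rewrite ltr0n.
have key : forall h : seq C, @Inv R C c1 c2 c3 jstar Dmin h -> size h = tau ->
    0 <= Q jstar - avg_value Q tau h <= B.
  move=> h Ih sh.
  have E : Q jstar - avg_value Q tau h
      = (\sum_j (Tcount h j)%:R * (Q jstar - Q j)) / tau%:R.
    rewrite /avg_value -sum_count sum_sub sh.
    by rewrite mulrBl mulfK ?gt_eqF.
  rewrite E; apply/andP; split.
    apply: divr_ge0; last exact: ltW.
    apply: sumr_ge0 => j _; apply: mulr_ge0 => //.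
    have [->|jn] := eqVneq j jstar; first by rewrite subrr.
    by rewrite subr_ge0 ltW ?Qlt.
  have S1 : \sum_j (Tcount h j)%:R * (Q jstar - Q j)
      <= (#|C|%:R - 1) * (K * powR tau%:R a + 1).
    rewrite (bigD1 jstar) //= subrr mulr0 add0r.
    apply: le_trans (_ : \sum_(j | j != jstar) (K * powR tau%:R a + 1) <= _).
      apply: ler_sum => j jn.
      apply: le_trans (_ : (Tcount h j)%:R <= _).
        rewrite -[X in _ <= X]mulr1 ler_wpM2l ?ler0n //.
        have := Q01 j; have := Q01 jstar; move=> /andP[? ?] /andP[? ?]; lra.
      by rewrite -sh; move: (@count_bound R C c1 c2 c3 jstar Dmin h j c1p c2p Dp Ih jn).
    have e : (#|C|%:R - 1 : R) = (#|C| - 1)%N%:R by rewrite natrB // (leq_trans _ C2).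
    by rewrite sumr_const cardC1 -subn1 e mulr_natl.
  have a0 : 0 <= a by rewrite divr_ge0 // ltW.
  have p1 : 1 <= powR tau%:R a.
    have := @ler_powR R tau%:R; rewrite ler1n => /(_ tau1 0 a a0). by rewrite powRr0.
  have b1 : 0 <= #|C|%:R - 1 :> R.
    by rewrite subr_ge0 ler1n (leq_trans _ C2).
  rewrite /B powRB; last by apply/implyP => _; rewrite gt_eqF.
  rewrite powRr1 ?ler0n // invf_div mulrA.
  rewrite ler_pM2r ?invr_gt0 //.
  apply: le_trans S1 _; rewrite -mulrA ler_wpM2l //.
  rewrite mulrDl mul1r lerD2l; lra.
have := @exp_run_inv R C Q c1 c2 c3 (fun h => @Inv R C c1 c2 c3 jstar Dmin h)
  (avg_value Q tau) (Q jstar - B) (Q jstar) jstar tau [::].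
case/(_ _ _ _)/andP.
- by move=> j _; left; rewrite /Tcount.
- by move=> h c Ih cin; exact: (@inv_step R C Q c1 c2 c3 jstar Dmin h c c1p c3p HD Ih cin).
- by move=> h' Ih' sh'; have /andP[H1 H2] := key h' Ih' sh'; apply/andP; split; lra.
move=> H1 H2; rewrite /expected_value.
rewrite ger0_norm; last by rewrite subr_ge0.
lra.
Qed.
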